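(* Let $p$ be an odd prime. Then the edge set of the complete graph $K_{p^4}$ can be partitioned into $(p^4-1)/4$ subgraphs, each isomorphic to $C_{p^2} \square C_{p^2}$.
   Context: $C_n$ denotes the cycle graph on $n$ vertices and $K_m$ the complete graph on $m$ vertices. For graphs $G=(V,E)$ and $G'=(V',E')$, the Cartesian product $G \square G'$ has vertex set $V\times V'$, with $\{(v,v'),(w,w')\}$ an edge iff either $\{v,w\}\in E$ and $v'=w'$, or $v=w$ and $\{v',w'\}\in E'$. Partitioning $K_m$ into copies of $G$ means decomposing its edge set into edge-disjoint subgraphs (on the vertex set of $K_m$) each isomorphic to $G$. *)

(* Defs.v *)
From mathcomp Require Import all_boot.
Set Implicit Arguments. Unset Strict Implicit. Unset Printing Implicit Defensive.

Definition cycle_adj (n : nat) : rel 'I_n :=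
  fun i j => (val j == (val i).+1 %% n) || (val i == (val j).+1 %% n).

Definition cart_adj (V V' : finType) (e : rel V) (e' : rel V') : rel (V * V') :=
  fun x y => (e x.1 y.1 && (x.2 == y.2)) || ((x.1 == y.1) && e' x.2 y.2).

Definition Kedges (m : nat) : {set {set 'I_m}} := [set E : {set 'I_m} | #|E| == 2].

Definition image_edges (V : finType) (e : rel V) (m : nat) (f : V -> 'I_m)
  : {set {set 'I_m}} := [set [set f xy.1; f xy.2] | xy in [set xy : V * V | e xy.1 xy.2]].

Definition iso_copy (V : finType) (e : rel V) (m : nat) (E : {set {set 'I_m}}) :=
  exists f : V -> 'I_m, injective f /\ E = image_edges e f.

Definition decomposes_into (m k : nat) (V : finType) (e : rel V) :=
  exists E : 'I_k -> {set {set 'I_m}},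
    [/\ forall i, iso_copy e (E i),
        forall i j, i != j -> [disjoint E i & E j]
      & \bigcup_(i < k) E i = Kedges m].
Arguments cycle_adj n : clear implicits.
Arguments Kedges m : clear implicits.

(* Main.v *)
Require Import Defs.
From mathcomp Require Import all_boot all_algebra finfield cyclic.
From mathcomp Require Import ring.
From mathcomp Require Import zify.
Set Implicit Arguments. Unset Strict Implicit. Unset Printing Implicit Defensive.
Import GRing.Theory.

Section Field.
Local Open Scope ring_scope.
Variable F : finFieldType.
Variable p : nat.
Hypothesis pchF : p \in [pchar F].

Definition fp (x : F) := x ^+ p == x.

Lemma fpD (x y : F) : (x + y) ^+ p = x ^+ p + y ^+ p.
Proof. by rewrite -!(pFrobenius_autE pchF) pFrobenius_autD_comm //; exact: mulrC. Qed.
Lemma fpN (x : F) : (- x) ^+ p = - x ^+ p.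
Proof. by rewrite -!(pFrobenius_autE pchF) pFrobenius_autN. Qed.
Lemma fpB (x y : F) : (x - y) ^+ p = x ^+ p - y ^+ p.
Proof. by rewrite fpD fpN. Qed.
Lemma fp_nat n : fp n%:R.
Proof. by rewrite /fp -(pFrobenius_autE pchF) pFrobenius_aut_nat. Qed.
Lemma fp_sub (x y : F) : fp x -> fp y -> fp (x - y).
Proof. by rewrite /fp fpB => /eqP-> /eqP->. Qed.

Lemma expp2D (x y : F) : (x + y) ^+ (p ^ 2) = x ^+ (p ^ 2) + y ^+ (p ^ 2).
Proof. by rewrite (expnS p 1) expn1 exprM fpD !exprM fpD. Qed.

Lemma fp_p2 (x : F) : fp x -> x ^+ (p ^ 2) = x.
Proof. by move=> /eqP h; rewrite (expnS p 1) expn1 exprM h h. Qed.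

Variables g t : F.
Hypothesis g_p2 : g ^+ (p ^ 2) = g.
Hypothesis g_p : g ^+ p != g.
Hypothesis t_p2 : t ^+ (p ^ 2) != t.

Lemma indep (a b c d : F) : fp a -> fp b -> fp c -> fp d ->
  a + b * g + (c + d * g) * t = 0 -> [/\ a = 0, b = 0, c = 0 & d = 0].
Proof.
move=> fa fb fc fd E.
have K x y : fp x -> fp y -> (x + y * g) ^+ (p ^ 2) = x + y * g.
  by move=> fx fy; rewrite expp2D exprMn g_p2 !fp_p2.
have p0 : (p ^ 2 == 0)%N = false by rewrite expn_eq0 andbT; apply/negbTE; rewrite -lt0n (prime_gt0 (pcharf_prime pchF)).
have E2 := congr1 (fun z => z ^+ (p ^ 2)) E; rewrite /= expp2D exprMn !K // in E2.
rewrite expr0n /= p0 in E2.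
have Hcd : c + d * g = 0.
  have : (c + d * g) * (t ^+ (p ^ 2) - t) = 0.
    have -> : (c + d * g) * (t ^+ (p ^ 2) - t) = (a + b * g + (c + d * g) * t ^+ (p ^ 2)) - (a + b * g + (c + d * g) * t) by ring.
    by rewrite E2 E subrr.
  by move/eqP; rewrite mulf_eq0 subr_eq0 (negbTE t_p2) orbF => /eqP.
have Hab : a + b * g = 0 by move: E; rewrite Hcd mul0r addr0.
have L x y : fp x -> fp y -> x + y * g = 0 -> x = 0 /\ y = 0.
  move=> fx fy H.
  have H2 := congr1 (fun z => z ^+ p) H; rewrite /= fpD exprMn (eqP fx) (eqP fy) in H2.
  rewrite expr0n /= eqn0Ngt (prime_gt0 (pcharf_prime pchF)) /= in H2.
  have : y * (g ^+ p - g) = 0.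
    have -> : y * (g ^+ p - g) = (x + y * g ^+ p) - (x + y * g) by ring.
    by rewrite H2 H subrr.
  move/eqP; rewrite mulf_eq0 subr_eq0 (negbTE g_p) orbF => /eqP y0.
  by split=> //; move: H; rewrite y0 mul0r addr0.
by have [-> ->] := L _ _ fa fb Hab; have [-> ->] := L _ _ fc fd Hcd.
Qed.

End Field.

Section Coord.
Local Open Scope ring_scope.
Variable F : finFieldType.
Variable p : nat.
Hypothesis pchF : p \in [pchar F].
Hypothesis p_gt1 : (1 < p)%N.

Lemma dm q r : (r < p)%N -> ((q * p + r) %/ p = q)%N /\ ((q * p + r) %% p = r)%N.
Proof.
move=> hr; split; first by rewrite divnMDl ?divn_small ?addn0 //; lia.
by rewrite modnMDl modn_small.
Qed.

Lemma natr_p : p%:R = 0 :> F. Proof. exact: pcharf0. Qed.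

Lemma natr_pm1 : (p.-1)%:R = -1 :> F.
Proof.
apply/eqP; rewrite -subr_eq0 opprK -[1]/(1%:R) -natrD addn1 prednK ?natr_p //; lia.
Qed.

Lemma nat_inj k k' : (k < p)%N -> (k' < p)%N -> k%:R = k'%:R :> F -> k = k'.
Proof.
wlog le : k k' / (k <= k')%N => [H|] hk hk' E.
  by case: (leqP k k') => h; [apply: H | symmetry; apply: H] => //; lia.
have : (k' - k)%:R = 0 :> F by rewrite natrB // E subrr.
move/eqP; rewrite -(dvdn_pcharf pchF) => /dvdnP [z hz].
have : (z * p < p)%N by rewrite -hz; lia.
case: z hz => [|z] hz; first by lia.
by rewrite mulSn => h; lia.
Qed.

Definition crd1 (x y : F) (i : nat) : F := ((i %/ p)%N)%:R * (y - x) + ((i %% p)%N)%:R * x.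

Lemma crd1_step x y i : (i < p ^ 2)%N ->
  crd1 x y ((i.+1 %% p ^ 2)%N) = crd1 x y i + (if (i %% p == p.-1)%N then y else x).
Proof.
move=> hi; rewrite /crd1.
have p0 : (0 < p)%N by lia.
have [hq hr] : (i %/ p < p)%N /\ (i %% p < p)%N.
  by split; [rewrite ltn_divLR // -expnSr (expnS p 1) expn1 mulnC; lia | rewrite ltn_mod].
have Ei := divn_eq i p.
case: eqP => hl.
- case: (ltnP (i %/ p).+1 p) => hq2.
  + have -> : (i.+1 %% p ^ 2 = (i %/ p).+1 * p + 0)%N.
      rewrite modn_small; last by rewrite (expnS p 1) expn1; nia.
      by rewrite {1}Ei hl mulSn; lia.
    have [-> ->] := dm (i %/ p).+1 p0.
    rewrite hl natr_pm1 -addn1 natrD; ring.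
  + have hq3 : (i %/ p = p.-1)%N by lia.
    have -> : (i.+1 %% p ^ 2 = 0 * p + 0)%N.
      have -> : (i.+1 = p ^ 2)%N by rewrite {1}Ei hl hq3 (expnS p 1) expn1; nia.
      by rewrite modnn.
    have [-> ->] := dm 0 p0.
    rewrite hl hq3 natr_pm1; ring.
- have hr2 : ((i %% p).+1 < p)%N by lia.
  have -> : (i.+1 %% p ^ 2 = (i %/ p) * p + (i %% p).+1)%N.
    rewrite modn_small; last by rewrite (expnS p 1) expn1; nia.
    by rewrite {1}Ei; lia.
  have [-> ->] := dm (i %/ p) hr2.
  rewrite -addn1 natrD; ring.
Qed.

Definition Ind (x y u v : F) := forall a b c d, fp p a -> fp p b -> fp p c -> fp p d ->
  a * x + b * y + c * u + d * v = 0 -> [/\ a = 0, b = 0, c = 0 & d = 0].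

Lemma qr_lt i : (i < p ^ 2)%N -> (i %/ p < p)%N /\ (i %% p < p)%N.
Proof.
have p0 : (0 < p)%N by lia.
by move=> hi; split; [rewrite ltn_divLR // -expnSr (expnS p 1) expn1 mulnC; lia | rewrite ltn_mod].
Qed.

Lemma crd1_inj1 (a b a' b' : nat) : (a < p)%N -> (b < p)%N -> (a' < p)%N -> (b' < p)%N ->
  (b%:R - b'%:R) - (a%:R - a'%:R) = 0 :> F -> a%:R - a'%:R = 0 :> F -> a = a' /\ b = b'.
Proof.
move=> ha hb ha' hb' E1 E2.
have Ea : a%:R = a'%:R :> F by apply/eqP; rewrite -subr_eq0 E2.
move: E1; rewrite E2 subr0 => /eqP; rewrite subr_eq0 => /eqP Eb.
by split; apply: nat_inj.
Qed.

Lemma crd_inj x y u v i j i' j' : Ind x y u v ->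
  (i < p ^ 2)%N -> (j < p ^ 2)%N -> (i' < p ^ 2)%N -> (j' < p ^ 2)%N ->
  crd1 x y i + crd1 u v j = crd1 x y i' + crd1 u v j' -> i = i' /\ j = j'.
Proof.
move=> hI hi hj hi' hj' E.
have [a0 b0 c0 d0] := hI
  ((((i %% p)%N)%:R - ((i' %% p)%N)%:R) - (((i %/ p)%N)%:R - ((i' %/ p)%N)%:R))
  (((i %/ p)%N)%:R - ((i' %/ p)%N)%:R)
  ((((j %% p)%N)%:R - ((j' %% p)%N)%:R) - (((j %/ p)%N)%:R - ((j' %/ p)%N)%:R))
  (((j %/ p)%N)%:R - ((j' %/ p)%N)%:R)
  ltac:(by do !apply: (fp_sub pchF); apply: (fp_nat pchF))
  ltac:(by do !apply: (fp_sub pchF); apply: (fp_nat pchF))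
  ltac:(by do !apply: (fp_sub pchF); apply: (fp_nat pchF))
  ltac:(by do !apply: (fp_sub pchF); apply: (fp_nat pchF))
  ltac:(by apply/eqP; rewrite -subr_eq0 -(subrr (crd1 x y i + crd1 u v j)) {2}E /crd1; apply/eqP; ring).
have [q1 r1] := qr_lt hi; have [q2 r2] := qr_lt hi'.
have [q3 r3] := qr_lt hj; have [q4 r4] := qr_lt hj'.
have [e1 e2] := crd1_inj1 q1 r1 q2 r2 a0 b0.
have [e3 e4] := crd1_inj1 q3 r3 q4 r4 c0 d0.
by split; [rewrite (divn_eq i p) (divn_eq i' p) e1 e2 | rewrite (divn_eq j p) (divn_eq j' p) e3 e4].
Qed.

Definition rp (i : nat) : nat := ((((i %% p) + p - (i %/ p)) %% p) * p + i %% p)%N.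

Lemma rp_lt i : (i < p ^ 2)%N -> (rp i < p ^ 2)%N.
Proof.
move=> hi; have [q r] := qr_lt hi; rewrite /rp (expnS p 1) expn1.
have : (((i %% p) + p - (i %/ p)) %% p < p)%N by rewrite ltn_mod; lia.
nia.
Qed.

Lemma rp_mod i : (rp i %% p = i %% p)%N.
Proof. by rewrite /rp modnMDl modn_mod. Qed.

Lemma crd1_rp x y i : (i < p ^ 2)%N -> crd1 y x (rp i) = crd1 x y i.
Proof.
move=> hi; have [q r] := qr_lt hi; rewrite /crd1.
have [-> ->] := dm (((i %% p) + p - (i %/ p)) %% p)%N r.
have nm (n : nat) : ((n %% p)%N)%:R = n%:R :> F.
  by rewrite {2}(divn_eq n p) natrD natrM natr_p mulr0 add0r.
rewrite nm natrB; last by lia.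
rewrite natrD natr_p; ring.
Qed.
End Coord.

Section Main.
Local Open Scope ring_scope.
Variable F : finFieldType.
Variable p : nat.
Hypothesis pchF : p \in [pchar F].
Hypothesis hodd : odd p.
Hypothesis hcard : #|F| = (p ^ 4)%N.
Variable th : F.
Hypothesis prim : (p ^ 4 - 1)%N.-primitive_root th.

Definition m2 := (p./2 * (p./2).+1)%N.
Definition hh := (2 * m2 + 1)%N.
Definition s0 := (2 * hh)%N.
Definition NN := (8 * m2 * hh)%N.

Lemma p_prime : prime p. Proof. exact: pcharf_prime pchF. Qed.
Lemma p_ge3 : (3 <= p)%N.
Proof.
have := prime_gt1 p_prime; case: p hodd => [|[|[|n]]] //.
Qed.
Lemma p_gt1 : (1 < p)%N. Proof. by have := p_ge3; lia. Qed.

Lemma pE : p = (p./2).*2.+1.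
Proof. by rewrite -[LHS](odd_double_half p) hodd. Qed.

Lemma p2E : (p ^ 2 = 4 * m2 + 1)%N.
Proof. rewrite /m2 {1}pE -!muln2 (expnS _ 1) expn1. nia. Qed.

Lemma m2_gt0 : (0 < m2)%N.
Proof. have := p_ge3; rewrite /m2 {1}pE -!muln2. nia. Qed.

Lemma NE : (p ^ 4 - 1 = NN)%N.
Proof.
have -> : (p ^ 4 = p ^ 2 * p ^ 2)%N by rewrite -expnD.
rewrite p2E /NN /hh; nia.
Qed.

Lemma NN_gt0 : (0 < NN)%N. Proof. have := m2_gt0; rewrite /NN /hh; nia. Qed.

Lemma primN : NN.-primitive_root th. Proof. by rewrite -NE. Qed.

Lemma th_inj a b : (a < NN)%N -> (b < NN)%N -> th ^+ a = th ^+ b -> a = b.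
Proof.
move=> ha hb /eqP; rewrite (eq_prim_root_expr primN) !modn_small //. by move/eqP.
Qed.

Lemma thN : th ^+ NN = 1. Proof. exact: prim_expr_order primN. Qed.

Lemma th_neq0 : th != 0.
Proof.
apply/negP => /eqP h; have := thN; rewrite h expr0n.
have hN := NN_gt0; rewrite eqn0Ngt hN /= => /eqP; rewrite eq_sym oner_eq0 //.
Qed.

Lemma thX_neq0 n : th ^+ n != 0. Proof. by rewrite expf_neq0 // th_neq0. Qed.

Lemma thM : th ^+ (4 * m2 * hh) = -1.
Proof.
have h2 : (th ^+ (4 * m2 * hh)) ^+ 2 = 1 by rewrite -exprM -thN /NN; congr (_ ^+ _); lia.
have : (th ^+ (4 * m2 * hh) - 1) * (th ^+ (4 * m2 * hh) + 1) = 0.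
  have -> : forall z : F, (z - 1) * (z + 1) = z ^+ 2 - 1 by move=> z; ring.
  by rewrite h2 subrr.
move/eqP; rewrite mulf_eq0 => /orP [|/eqP]; last by move/eqP; rewrite addr_eq0 => /eqP.
rewrite subr_eq0 -(expr0 th) (eq_prim_root_expr primN) mod0n modn_small.
  by have := m2_gt0; rewrite /hh; case: m2.
by have := m2_gt0; rewrite /NN /hh; nia.
Qed.

Definition X (e : nat) (b : bool) (b2 : nat) := th ^+ (e + b * s0 + b2).
Definition gg := th ^+ s0.

Lemma gg_p2 : gg ^+ (p ^ 2) = gg.
Proof.
rewrite /gg -exprM; apply/eqP; rewrite (eq_prim_root_expr primN).
have -> : (s0 * p ^ 2 = 1 * NN + s0)%N by rewrite p2E /s0 /NN /hh; nia.
by rewrite modnMDl.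
Qed.

Lemma gg_p : gg ^+ p != gg.
Proof.
rewrite /gg -exprM (eq_prim_root_expr primN) !modn_small.
- apply/negP => /eqP h; have := p_ge3; have : (0 < s0)%N by rewrite /s0 /hh; lia.
  move: h; nia.
- by rewrite /s0 /NN /hh; have := m2_gt0; nia.
- have h1 := p2E; have h3 := p_ge3; have h4 := m2_gt0.
  have : (p < 4 * m2)%N by nia.
  rewrite /s0 /NN /hh; nia.
Qed.

Lemma th_p2 : th ^+ (p ^ 2) != th.
Proof.
rewrite -{2}(expr1 th) (eq_prim_root_expr primN) !modn_small.
- by rewrite p2E; have := m2_gt0; lia.
- by have := m2_gt0; rewrite /NN /hh; nia.
- have := m2_gt0; rewrite p2E /NN /hh; nia.
Qed.

Lemma X_Ind e b : Ind p (X e b 0) (X e (~~ b) 0) (X e b 1) (X e (~~ b) 1).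
Proof.
move=> a1 b1 c1 d1 fa fb fc fd E.
have XE (bb : bool) (b2 : nat) : X e bb b2 = th ^+ e * ((if bb then gg else 1) * th ^+ b2).
  by case: bb; rewrite /X /gg /= ?mul1n ?mul0n ?addn0 !exprD ?mul1r ?mulrA.
move: E; rewrite !XE expr0 expr1 !mulr1.
have Hi := indep pchF gg_p2 gg_p th_p2.
case: b => /=.
- have -> : a1 * (th ^+ e * gg) + b1 * (th ^+ e * 1) + c1 * (th ^+ e * (gg * th)) + d1 * (th ^+ e * (1 * th))
     = th ^+ e * (b1 + a1 * gg + (d1 + c1 * gg) * th) by ring.
  move/eqP; rewrite mulf_eq0 (negbTE (thX_neq0 e)) /= => /eqP.
  by case/Hi => // -> -> -> ->.
- have -> : a1 * (th ^+ e * 1) + b1 * (th ^+ e * gg) + c1 * (th ^+ e * (1 * th)) + d1 * (th ^+ e * (gg * th))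
     = th ^+ e * (a1 + b1 * gg + (c1 + d1 * gg) * th) by ring.
  move/eqP; rewrite mulf_eq0 (negbTE (thX_neq0 e)) /= => /eqP.
  by case/Hi => // -> -> -> ->.
Qed.

Definition crdc e b i j := crd1 p (X e b 0) (X e (~~ b) 0) i + crd1 p (X e b 1) (X e (~~ b) 1) j.

Lemma crdc_inj e b i j i' j' :
  (i < p ^ 2)%N -> (j < p ^ 2)%N -> (i' < p ^ 2)%N -> (j' < p ^ 2)%N ->
  crdc e b i j = crdc e b i' j' -> i = i' /\ j = j'.
Proof. exact: (crd_inj pchF p_gt1 (@X_Ind e b)). Qed.

Lemma crdc_swap e b i j : (i < p ^ 2)%N -> (j < p ^ 2)%N ->
  crdc e (~~ b) i j = crdc e b (rp p i) (rp p j).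
Proof.
move=> hi hj; rewrite /crdc negbK.
by rewrite (crd1_rp pchF p_gt1 (X e (~~ b) 0) _ hi) (crd1_rp pchF p_gt1 (X e (~~ b) 1) _ hj).
Qed.

Definition lvl (i j : nat) (d : bool) := ((if d then j else i) %% p == p.-1)%N.

Lemma crdc_step1 e b i j : (i < p ^ 2)%N ->
  crdc e b ((i.+1 %% p ^ 2)%N) j = crdc e b i j + X e (lvl i j false (+) b) 0.
Proof.
move=> hi; rewrite /crdc (crd1_step pchF p_gt1 _ _ hi) /lvl.
by case: eqP => _; case: b => /=; rewrite addrAC.
Qed.

Lemma crdc_step2 e b i j : (j < p ^ 2)%N ->
  crdc e b i ((j.+1 %% p ^ 2)%N) = crdc e b i j + X e (lvl i j true (+) b) 1.
Proof.
move=> hj; rewrite /crdc (crd1_step pchF p_gt1 _ _ hj) /lvl.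
by case: eqP => _; case: b => /=; rewrite addrA.
Qed.

Lemma uniq_qr d q r q' r' : (r < d)%N -> (r' < d)%N -> (q * d + r = q' * d + r')%N -> q = q' /\ r = r'.
Proof.
move=> hr hr' E.
have d0 : (0 < d)%N by lia.
have E1 := congr1 (fun n => n %/ d)%N E; have E2 := congr1 (fun n => n %% d)%N E.
move: E1 E2 => /=; rewrite !divnMDl // !modnMDl !divn_small // !modn_small // !addn0.
by [].
Qed.

Definition valid e := exists q r, [/\ (q < m2)%N, (r < hh)%N & e = (4 * q * hh + 2 * r)%N].

Lemma X_lt e (b : bool) (d : bool) : valid e -> (e + b * s0 + d < 4 * m2 * hh)%N.
Proof.
case=> q [r [hq hr ->]]; rewrite /s0.
have : (q.+1 <= m2)%N by []. case: b; case: d => /=; nia.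
Qed.

Lemma tiling e e' (b b' d d' : bool) : valid e -> valid e' ->
  (e + b * s0 + d = e' + b' * s0 + d')%N -> [/\ e = e', b = b' & d = d'].
Proof.
case=> q [r [hq hr ->]]; case=> q' [r' [hq' hr' ->]] E.
have [h1 h2] : ((2 * q + b) = (2 * q' + b'))%N /\ ((2 * r + d) = (2 * r' + d'))%N.
  apply: (@uniq_qr (2 * hh)).
  - by destruct d; simpl; lia.
  - by destruct d'; simpl; lia.
  by move: E; rewrite /s0; destruct b, b', d, d'; simpl; nia.
have eb : b = b' by move: h1; destruct b, b'; simpl; lia.
have ed : d = d' by move: h2; destruct d, d'; simpl; lia.
subst b' d'.
have -> : q = q' by move: h1; lia.
have -> : r = r' by move: h2; lia.
by [].
Qed.

Lemma same_edge e b e' b' i j i' j' (d d' : bool) : valid e -> valid e' ->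
  (i < p ^ 2)%N -> (j < p ^ 2)%N -> (i' < p ^ 2)%N -> (j' < p ^ 2)%N ->
  let P := crdc e b i j in let P' := crdc e' b' i' j' in
  let z := X e (lvl i j d (+) b) d in let z' := X e' (lvl i' j' d' (+) b') d' in
  (P = P' /\ P + z = P' + z') \/ (P = P' + z' /\ P + z = P') ->
  e = e' /\ b = b'.
Proof.
move=> ve ve' hi hj hi' hj' P P' z z' H.
have zn : z != 0 by apply: thX_neq0.
have zn' : z' != 0 by apply: thX_neq0.
have hM := X_lt (lvl i j d (+) b) d ve.
have hM' := X_lt (lvl i' j' d' (+) b') d' ve'.
case: H => [[EP Ez]|[EP Ez]]; last first.
  exfalso.
  have : z = - z'.
    by apply/eqP; rewrite -subr_eq0 opprK; apply/eqP; rewrite -[z](addKr P) Ez EP; ring.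
  rewrite /z /z' /X -mulN1r -thM -exprD => /th_inj.
  have : (0 < m2)%N := m2_gt0.
  rewrite /NN; move=> m0 hh'; have := hh' ltac:(nia) ltac:(nia); lia.
have zz : z = z' by apply: (addrI P); rewrite Ez EP.
move: zz; rewrite /z /z' /X => /th_inj.
have m0 : (0 < m2)%N := m2_gt0.
move=> /(_ ltac:(rewrite /NN; nia) ltac:(rewrite /NN; nia)) /(tiling ve ve') [ee eb ed].
subst e' d'; split=> //.
case: (boolP (b == b')) => [/eqP //|nb].
have eb' : b' = ~~ b by move: nb; destruct b, b'.
subst b'; exfalso.
move: EP; rewrite /P /P' crdc_swap // => /crdc_inj.
move=> /(_ hi hj (rp_lt pchF p_gt1 hi') (rp_lt pchF p_gt1 hj')) [ei ej].
move: eb; rewrite /lvl ei ej.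
by destruct d; rewrite rp_mod; case: (_ == _); destruct b.
Qed.

Definition phi (x : F) : 'I_(p ^ 4) := cast_ord hcard (enum_rank x).
Lemma phi_inj : injective phi.
Proof. by move=> x y /cast_ord_inj /enum_rank_inj. Qed.
Lemma phi_surj (a : 'I_(p ^ 4)) : exists x, a = phi x.
Proof. by exists (enum_val (cast_ord (esym hcard) a)); rewrite /phi enum_valK cast_ordKV. Qed.

Local Notation V := ('I_(p ^ 2) * 'I_(p ^ 2))%type.
Definition adjV := cart_adj (cycle_adj (p ^ 2)) (cycle_adj (p ^ 2)).
Definition fc e b (ij : V) : 'I_(p ^ 4) := phi (crdc e b ij.1 ij.2).
Definition Ec e b := image_edges adjV (fc e b).

Lemma fc_inj e b : injective (fc e b).
Proof.
move=> [i j] [i' j'] /phi_inj /= /crdc_inj.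
by move=> /(_ (ltn_ord i) (ltn_ord j) (ltn_ord i') (ltn_ord j')) [/val_inj -> /val_inj ->].
Qed.

Lemma p2_gt0 : (0 < p ^ 2)%N. Proof. by rewrite expn_gt0; have := p_gt1; lia. Qed.

Lemma edge_shape e b (a a' : V) : adjV a a' -> exists i j (d : bool),
  [/\ (i < p ^ 2)%N, (j < p ^ 2)%N &
   [set fc e b a; fc e b a'] = [set phi (crdc e b i j); phi (crdc e b i j + X e (lvl i j d (+) b) d)]].
Proof.
case: a a' => [a1 a2] [a1' a2'].
rewrite /adjV /cart_adj /cycle_adj /fc /= => /orP [/andP [/orP [] /eqP h /eqP h2] | /andP [/eqP h2 /orP [] /eqP h]].
- exists a1, a2, false; split => //; rewrite -h2 -crdc_step1 //.
  by rewrite -h.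
- exists a1', a2', false; split => //; rewrite h2 -crdc_step1 // setUC.
  by rewrite -h.
- exists a1, a2, true; split => //; rewrite -h2 -crdc_step2 //.
  by rewrite -h.
- exists a1', a2', true; split => //; rewrite h2 -crdc_step2 // setUC.
  by rewrite -h.
Qed.

Lemma set2_inj (A B A' B' : F) : A != B ->
  [set phi A; phi B] = [set phi A'; phi B'] -> (A = A' /\ B = B') \/ (A = B' /\ B = A').
Proof.
move=> nAB E.
have hA : phi A \in [set phi A'; phi B'] by rewrite -E !inE eqxx.
have hB : phi B \in [set phi A'; phi B'] by rewrite -E !inE eqxx orbT.
move: hA hB; rewrite !inE => /orP [] /eqP /phi_inj hA /orP [] /eqP /phi_inj hB.
- by move: nAB; rewrite hA hB eqxx.
- by left.
- by right.
- by move: nAB; rewrite hA hB eqxx.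
Qed.

Lemma E_sub e b S : S \in Ec e b -> S \in Kedges (p ^ 4).
Proof.
case/imsetP => [[a a']]; rewrite inE /= => hadj ->.
have [i [j [d [hi hj ->]]]] := edge_shape e b hadj.
rewrite /Kedges inE cards2.
suff -> : phi (crdc e b i j) != phi (crdc e b i j + X e (lvl i j d (+) b) d) by [].
apply/negP => /eqP /phi_inj h.
have := thX_neq0 (e + (lvl i j d (+) b) * s0 + d).
by rewrite -/(X _ _ _) -[X _ _ _](addKr (crdc e b i j)) -h addNr eqxx.
Qed.

Lemma E_disj e b e' b' S : valid e -> valid e' ->
  S \in Ec e b -> S \in Ec e' b' -> e = e' /\ b = b'.
Proof.
move=> ve ve' /imsetP [[a a']]; rewrite inE /= => hadj ->.
move=> /imsetP [[c c']]; rewrite inE /= => hadj'.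
have [i [j [d [hi hj ->]]]] := edge_shape e b hadj.
have [i' [j' [d' [hi' hj' ->]]]] := edge_shape e' b' hadj'.
move=> /set2_inj H.
apply: (same_edge ve ve' hi hj hi' hj') => /=.
apply: H; apply/negP => /eqP h.
have := thX_neq0 (e + (lvl i j d (+) b) * s0 + d).
by rewrite -/(X _ _ _) -[X _ _ _](addKr (crdc e b i j)) -h addNr eqxx.
Qed.

Lemma crdc_surj e b P : exists i j, [/\ (i < p ^ 2)%N, (j < p ^ 2)%N & P = crdc e b i j].
Proof.
pose g (ij : V) := crdc e b ij.1 ij.2.
have ginj : injective g.
  move=> [i j] [i' j']; rewrite /g /= => /crdc_inj.
  by move=> /(_ (ltn_ord i) (ltn_ord j) (ltn_ord i') (ltn_ord j')) [/val_inj -> /val_inj ->].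
have hc : (#|{: V}| >= #|F|)%N by rewrite card_prod !card_ord hcard -expnD.
have /codomP [[i j] Pe] := inj_card_onto ginj hc P.
by exists i, j; split.
Qed.

Lemma cover_core P n : (n < 4 * m2 * hh)%N ->
  exists e b, valid e /\ [set phi P; phi (P + th ^+ n)] \in Ec e b.
Proof.
move=> hn.
have s0p : (0 < s0)%N by rewrite /s0 /hh; lia.
set qq := (n %/ s0)%N; set rr := (n %% s0)%N.
have hqq : (qq < 2 * m2)%N by rewrite /qq ltn_divLR // /s0; nia.
have hrr : (rr < s0)%N by rewrite /rr ltn_mod.
have En : n = (qq * s0 + rr)%N by rewrite /qq /rr -divn_eq.
set e := (4 * qq./2 * hh + 2 * rr./2)%N.
set b1 := odd qq; set d := odd rr.
have ve : valid e.
  exists qq./2, rr./2; split => //.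
  - have := odd_double_half qq; rewrite -/b1 -muln2; destruct b1; simpl; lia.
  - have := odd_double_half rr; rewrite -/d -muln2; move: hrr; rewrite /s0; destruct d; simpl; lia.
have En2 : n = (e + b1 * s0 + d)%N.
  have h1 := odd_double_half qq; have h2 := odd_double_half rr.
  rewrite -/b1 -/d -!muln2 in h1 h2.
  rewrite En /e /s0; move: h1 h2; destruct b1, d; simpl; nia.
have [i [j [hi hj EP]]] := crdc_surj e false P.
pose b := lvl i j d (+) b1.
have [i0 [j0 [hi0 hj0 [EP0 El]]]] : exists i0 j0, [/\ (i0 < p ^ 2)%N, (j0 < p ^ 2)%N &
   P = crdc e b i0 j0 /\ lvl i0 j0 d (+) b = b1].
  case hb : b.
  - exists (rp p i), (rp p j); split; [exact: (rp_lt pchF p_gt1 hi) | exact: (rp_lt pchF p_gt1 hj) | ].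
    split; first by rewrite EP -[false]/(~~ true) crdc_swap.
    by move: hb; rewrite /b /lvl; case: (d); rewrite /= !rp_mod; case: (_ == _); case: (b1).
  - exists i, j; split => //; split => //.
    by move: hb; rewrite /b; case: (b1); case: (lvl i j d).
exists e, b; split => //.
rewrite En2 -/(X e b1 d) -El.
apply/imsetP.
have hi1 : ((i0.+1 %% p ^ 2) < p ^ 2)%N by rewrite ltn_mod p2_gt0.
have hj1 : ((j0.+1 %% p ^ 2) < p ^ 2)%N by rewrite ltn_mod p2_gt0.
case hd : d.
- exists ((Ordinal hi0, Ordinal hj0), (Ordinal hi0, Ordinal hj1)).
    rewrite inE /adjV /cart_adj /cycle_adj /=; apply/orP; right; rewrite /= !eqxx /= ?orbT //.
  by rewrite /fc /= crdc_step2 // -EP0.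
- exists ((Ordinal hi0, Ordinal hj0), (Ordinal hi1, Ordinal hj0)).
    rewrite inE /adjV /cart_adj /cycle_adj /=; apply/orP; left; rewrite /= !eqxx /= ?orbT //.
  by rewrite /fc /= crdc_step1 // -EP0.
Qed.

Definition ee (c : nat) := (4 * (c./2 %/ hh) * hh + 2 * (c./2 %% hh))%N.

Lemma kE : ((p ^ 4 - 1) %/ 4 = 2 * m2 * hh)%N.
Proof. by rewrite NE /NN (_ : 8 * m2 * hh = (2 * m2 * hh) * 4)%N ?mulnK //; lia. Qed.

Lemma hh_gt0 : (0 < hh)%N. Proof. rewrite /hh; lia. Qed.

Lemma ee_valid c : (c < 2 * m2 * hh)%N -> valid (ee c).
Proof.
move=> hc; exists (c./2 %/ hh)%N, (c./2 %% hh)%N; split => //.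
- rewrite ltn_divLR ?hh_gt0 //; have := odd_double_half c; rewrite -muln2; nia.
- by rewrite ltn_mod hh_gt0.
Qed.

Lemma ee_inj c c' : ee c = ee c' -> odd c = odd c' -> c = c'.
Proof.
rewrite /ee => E Eo.
have [h1 h2] : (c./2 %/ hh = c'./2 %/ hh)%N /\ (2 * (c./2 %% hh) = 2 * (c'./2 %% hh))%N.
  apply: (@uniq_qr (4 * hh)).
  - have := ltn_pmod c./2 hh_gt0; lia.
  - have := ltn_pmod c'./2 hh_gt0; lia.
  by move: E; rewrite !mulnA; lia.
have h3 : c./2 = c'./2 by rewrite (divn_eq c./2 hh) (divn_eq c'./2 hh) h1; lia.
by rewrite -(odd_double_half c) -(odd_double_half c') h3 Eo.
Qed.

Lemma valid_ee e (b : bool) : valid e -> exists c, [/\ (c < 2 * m2 * hh)%N, ee c = e & odd c = b].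
Proof.
case=> q [r [hq hr ->]].
exists (b + (q * hh + r).*2)%N; split.
- rewrite -muln2; destruct b; simpl; nia.
- rewrite /ee half_bit_double.
  have [-> ->] : ((q * hh + r) %/ hh = q)%N /\ ((q * hh + r) %% hh = r)%N.
    by split; [rewrite divnMDl ?hh_gt0 // divn_small // addn0 | rewrite modnMDl modn_small].
  by [].
- by rewrite oddD odd_double; case: b.
Qed.

Lemma main : decomposes_into (p ^ 4) ((p ^ 4 - 1) %/ 4) adjV.
Proof.
rewrite kE.
exists (fun c : 'I_(2 * m2 * hh) => Ec (ee c) (odd c)); split.
- by move=> c; exists (fc (ee c) (odd c)); split => //; apply: fc_inj.
- move=> c c' nc; rewrite disjoint_subset; apply/subsetP => S h1; rewrite inE; apply/negP => h2.
  have [] := E_disj (ee_valid (ltn_ord c)) (ee_valid (ltn_ord c')) h1 h2.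
  by move=> /ee_inj H /H /val_inj ec; move: nc; rewrite ec eqxx.
- apply/setP => S; apply/bigcupP/idP => [[c _ /E_sub] //|].
  rewrite inE => /cards2P [x [y [nxy ->]]].
  move: nxy; have [P ->] := phi_surj x; have [Q ->] := phi_surj y; move=> nxy.
  have nPQ : Q - P != 0 by rewrite subr_eq0; apply/negP => /eqP h; move: nxy; rewrite h eqxx.
  have z1 : (Q - P) ^+ NN = 1.
    have := expf_card (Q - P); rewrite hcard -(subnK (_ : 1 <= p ^ 4)%N); last by rewrite expn_gt0; have := p_gt1; lia.
    rewrite NE exprD expr1 => H; apply: (mulIf nPQ); by rewrite mul1r H.
  have [[n hn] /= En] := prim_rootP primN z1.
  have [e [b [ve hS]]] : exists e b, valid e /\ [set phi P; phi Q] \in Ec e b.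
    case: (ltnP n (4 * m2 * hh)) => hn2.
    + have [e [b [ve hS]]] := cover_core P hn2.
      by exists e, b; split => //; move: hS; rewrite -En addrC subrK.
    + have hn3 : (n - 4 * m2 * hh < 4 * m2 * hh)%N by move: hn; rewrite /NN; lia.
      have [e [b [ve hS]]] := cover_core Q hn3.
      exists e, b; split => //; move: hS.
      have -> : th ^+ (n - 4 * m2 * hh) = P - Q.
        apply: (mulfI (thX_neq0 (4 * m2 * hh))); rewrite -exprD subnKC // thM -En; ring.
      by rewrite addrC subrK setUC.
  have [c [hc ec oc]] := valid_ee b ve.
  by exists (Ordinal hc) => //=; rewrite ec oc.
Qed.
End Main.

Theorem theorem2 (p : nat) (hp : prime p) (hodd : odd p) :
  decomposes_into (p ^ 4) ((p ^ 4 - 1) %/ 4)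
    (cart_adj (cycle_adj (p ^ 2)) (cycle_adj (p ^ 2))).
Proof.
have [F pchF hcard] := pPrimePowerField hp (isT : (0 < 4)%N).
have [th prim] : exists th : F, ((p ^ 4 - 1)%N.-primitive_root th)%R.
  pose rs := enum (predC1 (0 : F)%R).
  have n0 : (0 < p ^ 4 - 1)%N.
    have := prime_gt1 hp; have -> : (p ^ 4 = p * p * p * p)%N by rewrite !expnS expn0 muln1 !mulnA.
    nia.
  have : has ((p ^ 4 - 1)%N.-primitive_root)%R rs.
    apply: has_prim_root => //.
    - apply/allP => x; rewrite mem_enum inE => nx.
      rewrite unity_rootE; apply/eqP.
      have H : (x ^+ (p ^ 4 - 1) * x = x)%R.
        rewrite -GRing.exprSr subn1 prednK; last by lia.
        by have := expf_card x; rewrite hcard.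
      apply: (GRing.mulIf nx); by rewrite GRing.mul1r H.
    - by rewrite enum_uniq.
    - by rewrite -cardE cardC1 hcard subn1.
  by case/hasP => th _ hth; exists th.
exact: (main pchF hodd hcard prim).
Qed.
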